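(* Let $R\subseteq\mathbb{R}^2$ be open and let $f:R\to\mathbb{R}^2$ be a light $C^1$ function. Let $R_1$ and $R_2$ be distinct connected components of $R\setminus f^{-1}(f(S)\cup C(f))$ with $\overline{R_1}\cap\overline{R_2}\neq\varnothing$, and suppose $f(R_1)=f(R_2)=\Omega$. If $\partial\Omega\cap\operatorname{int}\overline{\Omega}$ consists of a finite number of points, then there is no non-empty, non-degenerate connected set $\gamma\subseteq(\overline{R_1}\cap\overline{R_2}\cap R)\setminus S$ such that $R_1\cup R_2\cup\gamma$ is open.
   Context: A function is light if the preimage of each point is empty or totally disconnected. A connected set is degenerate if it consists of a single point. Write $f=(u,v)$; $J_f=u_xv_y-u_yv_x$ and $S=\{z\in R: J_f(z)=0\}$. $C(f)$ is the set of finite points $\zeta\in\mathbb{R}^2$ for which there is a sequence $(z_n)\subset R$ converging to a point of $\partial R$ or with $|z_n|\to\infty$, such that $f(z_n)\to\zeta$. *)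

(* Defs.v *)
(* The plane R^2 is modelled as R * R with the
   product (= Euclidean) topology, for an arbitrary R : realType. *)
From HB Require Import structures.
From mathcomp Require Import all_boot all_order all_algebra.
From mathcomp Require Import all_classical all_reals all_analysis.
Set Implicit Arguments. Unset Strict Implicit. Unset Printing Implicit Defensive.
Import Order.TTheory GRing.Theory Num.Theory.
Import numFieldNormedType.Exports.
Local Open Scope classical_set_scope.
Local Open Scope ring_scope.

Section Defs.
Variable R : realType.
Local Notation P := (R * R)%type.

Definition bdry (A : set P) : set P := closure A `\` interior A.

(* light: preimage (within the domain D) of each point is totally disconnected
   (the empty set is vacuously totally disconnected) *)
Definition light (D : set P) (f : P -> P) : Prop :=
  forall w : P, totally_disconnected (D `&` f @^-1` [set w]).

Definition pdx (f : P -> P) (p : P) : P := derive1 (fun t : R => f (t, p.2)) p.1.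
Definition pdy (f : P -> P) (p : P) : P := derive1 (fun t : R => f (p.1, t)) p.2.

Definition C1_on (D : set P) (f : P -> P) : Prop :=
  forall p : P, D p ->
    [/\ derivable (fun t : R => f (t, p.2)) p.1 1,
        derivable (fun t : R => f (p.1, t)) p.2 1,
        {for p, continuous (pdx f)} &
        {for p, continuous (pdy f)}].

Definition jac (f : P -> P) (p : P) : R :=
  (pdx f p).1 * (pdy f p).2 - (pdy f p).1 * (pdx f p).2.

Definition crit (D : set P) (f : P -> P) : set P := [set z | D z /\ jac f z = 0].

Definition clusterC (D : set P) (f : P -> P) : set P :=
  [set zeta | exists z : nat -> P,
     (forall n, D (z n)) /\
     ((exists b, bdry D b /\ z @ \oo --> b) \/
      ((fun n => `|z n|) @ \oo --> +oo)) /\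
     (f \o z) @ \oo --> zeta].

Definition is_component (A C : set P) : Prop :=
  exists x, A x /\ C = connected_component A x.

Definition degenerate (A : set P) : Prop := exists p, A = [set p].

End Defs.

(* Main.v *)
From HB Require Import structures.
From mathcomp Require Import all_boot all_order all_algebra.
From mathcomp Require Import all_classical all_reals all_analysis.
From mathcomp Require Import ring lra.
Require Import Defs.
Import Order.TTheory GRing.Theory Num.Theory.
Import numFieldNormedType.Exports.
Local Open Scope classical_set_scope.
Local Open Scope ring_scope.

Section S. Variable R : realType.
HB.instance Definition _ := Pointed.on (R*R)%type.
Lemma prodR_complete (F : set_system (R * R)%type) : ProperFilter F -> cauchy F -> cvg F.
Proof.
move=> FF /cauchy_ballP Fc.
have c1 : cauchy (fst @ F).
  apply/cauchy_ballP => e e0; have [[A B] /= [FA FB] AB] := Fc e e0.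
  exists (fst @` A, fst @` B) => /=.
    by split; [apply: (@filterS _ F FF A _ _ FA)|apply: (@filterS _ F FF B _ _ FB)] => x Ax; exists x.
  by move=> [_ _] /= [/= [x Ax <-] [y By <-]]; have [] := AB (x, y) (conj Ax By).
have c2 : cauchy (snd @ F).
  apply/cauchy_ballP => e e0; have [[A B] /= [FA FB] AB] := Fc e e0.
  exists (snd @` A, snd @` B) => /=.
    by split; [apply: (@filterS _ F FF A _ _ FA)|apply: (@filterS _ F FF B _ _ FB)] => x Ax; exists x.
  by move=> [_ _] /= [/= [x Ax <-] [y By <-]]; have [] := AB (x, y) (conj Ax By).
have /cauchy_cvg cv1 := c1.
have /cauchy_cvg cv2 := c2.
apply/cvg_ex; exists (lim (fst @ F), lim (snd @ F)).
apply/cvg_ballP => e e0.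
have h1 := cvg_ball cv1 e0.
have h2 := cvg_ball cv2 e0.
have H1 : F (fun x => ball (lim (fst @ F)) e x.1) := h1 FF.
have H2 : F (fun x => ball (lim (snd @ F)) e x.2) := h2 FF.
move: H1 H2; apply: (@filterS2 _ F FF) => x b1 b2; split => //.
Qed.
HB.instance Definition _ := Uniform_isComplete.Build (R * R)%type prodR_complete.
End S.
Section Fix.
Variables (R : realType) (U : set (R * R)%type) (T : (R * R)%type -> (R * R)%type) (k : R).
Hypotheses (k0 : 0 <= k) (k1 : k < 1) (TS : forall x, U x -> U (T x))
  (TL : forall x y, U x -> U y -> `|T x - T y| <= k * `|x - y|).
Let T' := T.
HB.instance Definition _ := isFun.Build _ _ U U T' TS.
Lemma fixpt_ex : closed U -> U !=set0 -> exists2 p, U p & p = T p.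
Proof.
move=> cU nU.
have ctr : is_contraction (T' : {fun U >-> U}).
  exists (NngNum k0); split => //.
  by move=> [x y] [/= Ux Uy]; exact: TL.
exact: (banach_fixed_point ctr cU nU).
Qed.
End Fix.

Section Analysis.
Variable R : realType.
Local Notation P := (R * R)%type.

Lemma nP1 (x : P) : `|x.1| <= `|x|.
Proof. by rewrite prod_normE le_max lexx. Qed.
Lemma nP2 (x : P) : `|x.2| <= `|x|.
Proof. by rewrite prod_normE le_max lexx orbT. Qed.
Lemma nPle (x : P) c : `|x.1| <= c -> `|x.2| <= c -> `|x| <= c.
Proof. by move=> h1 h2; rewrite prod_normE ge_max h1 h2. Qed.

Lemma cvg1 {T} {F : set_system T} {FF : Filter F} (q : T -> P) (l : P) :
  q @ F --> l -> (fun x => (q x).1 : R) @ F --> (l.1 : R).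
Proof.
move=> /cvgrPdist_lt ql; apply/cvgrPdist_lt => e e0.
by apply: filterS (ql e e0) => x; apply: le_lt_trans; exact: (nP1 (l - q x)).
Qed.
Lemma cvg2 {T} {F : set_system T} {FF : Filter F} (q : T -> P) (l : P) :
  q @ F --> l -> (fun x => (q x).2 : R) @ F --> (l.2 : R).
Proof.
move=> /cvgrPdist_lt ql; apply/cvgrPdist_lt => e e0.
by apply: filterS (ql e e0) => x; apply: le_lt_trans; exact: (nP2 (l - q x)).
Qed.

Lemma deriv_c1 (G : R -> P) t : derivable G t 1 ->
  is_derive t 1 (fun s => (G s).1) ('D_1 G t).1.
Proof.
move=> dG; have /cvg_ex [l hl] := dG.
have e : 'D_1 G t = l by apply: cvg_lim.
have h1 := @cvg1 _ _ _ _ _ hl.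
apply: DeriveDef; first by rewrite /derivable; apply/cvg_ex; exists l.1; exact: (h1 (Proper_dnbhs_numFieldType (0:R))).
rewrite e; apply: (cvg_lim (@Rhausdorff R)); exact: (h1 (Proper_dnbhs_numFieldType (0:R))).
Qed.
Lemma deriv_c2 (G : R -> P) t : derivable G t 1 ->
  is_derive t 1 (fun s => (G s).2) ('D_1 G t).2.
Proof.
move=> dG; have /cvg_ex [l hl] := dG.
have e : 'D_1 G t = l by apply: cvg_lim.
have h1 := @cvg2 _ _ _ _ _ hl.
apply: DeriveDef; first by rewrite /derivable; apply/cvg_ex; exists l.2; exact: (h1 (Proper_dnbhs_numFieldType (0:R))).
rewrite e; apply: (cvg_lim (@Rhausdorff R)); exact: (h1 (Proper_dnbhs_numFieldType (0:R))).
Qed.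

Lemma mvt_bound (g dg : R -> R) (a b M : R) :
  (forall x, Num.min a b <= x <= Num.max a b -> is_derive x 1 g (dg x) /\ `|dg x| <= M) ->
  `|g b - g a| <= M * `|b - a|.
Proof.
move=> H; wlog ab : a b H / a <= b.
  move=> W; case: (leP a b) => [ab|ba]; first exact: W.
  rewrite distrC (distrC b a); apply: W; last exact: ltW.
  by move=> x hx; apply: H; rewrite minC maxC.
move: H; rewrite (min_idPl ab) (max_idPr ab) => H.
have cont : {within `[a, b], continuous g}.
  apply: derivable_within_continuous => x; rewrite in_itv /= => hx.
  by have [[]] := H x hx.
have dH : forall x, x \in `]a, b[ -> is_derive x 1 g (dg x).
  move=> x; rewrite in_itv /= => /andP[h1 h2].
  have hx : a <= x <= b by rewrite (ltW h1) (ltW h2).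
  by case: (H x hx).
have [c cab ->] := MVT_segment ab dH cont.
move: cab; rewrite in_itv /= => cab.
rewrite normrM (ger0_norm (x := b - a)) ?subr_ge0 //.
by rewrite ler_wpM2r ?subr_ge0 //; have [] := H c cab.
Qed.

Lemma seg_bound (G : R -> P) (c : P) (x y e : R) :
  (forall t, Num.min y x <= t <= Num.max y x -> derivable G t 1 /\ `|c - 'D_1 G t| < e) ->
  `|G x - G y - (x - y) *: c| <= e * `|x - y|.
Proof.
move=> H; apply: nPle.
  have -> : (G x - G y - (x - y) *: c).1 = ((G x).1 - c.1 * x) - ((G y).1 - c.1 * y).
    by rewrite /= -[(x - y) *: c.1]/((x - y) * c.1); ring.
  apply: (@mvt_bound (fun t => (G t).1 - c.1 * t) (fun t => ('D_1 G t).1 - c.1)).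
  move=> t ht; have [dG hb] := H t ht; split.
    have h1 := @deriv_c1 G t dG.
    have h2 : is_derive t 1 (fun s : R => c.1 * s) c.1.
      exact: (is_derive_eq (is_deriveZ c.1 (is_derive_id t 1)) (mulr1 c.1)).
    exact: (is_deriveB h1 h2).
  apply: ltW; apply: le_lt_trans hb; rewrite [X in X <= _]distrC.
  exact: (nP1 (c - 'D_1 G t)).
have -> : (G x - G y - (x - y) *: c).2 = ((G x).2 - c.2 * x) - ((G y).2 - c.2 * y).
  by rewrite /= -[(x - y) *: c.2]/((x - y) * c.2); ring.
apply: (@mvt_bound (fun t => (G t).2 - c.2 * t) (fun t => ('D_1 G t).2 - c.2)).
move=> t ht; have [dG hb] := H t ht; split.
  have h1 := @deriv_c2 G t dG.
  have h2 : is_derive t 1 (fun s : R => c.2 * s) c.2.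
    exact: (is_derive_eq (is_deriveZ c.2 (is_derive_id t 1)) (mulr1 c.2)).
  exact: (is_deriveB h1 h2).
apply: ltW; apply: le_lt_trans hb; rewrite [X in X <= _]distrC.
exact: (nP2 (c - 'D_1 G t)).
Qed.

Lemma between_ball (c x y t r : R) : `|c - x| < r -> `|c - y| < r ->
  Num.min y x <= t <= Num.max y x -> `|c - t| < r.
Proof.
rewrite !ltr_distlC => /andP[x1 x2] /andP[y1 y2] /andP[t1 t2].
apply/andP; split.
  by apply: lt_le_trans t1; rewrite lt_min y1 x1.
by apply: le_lt_trans t2 _; rewrite gt_max y2 x2.
Qed.

Lemma nPlt (x : P) c : `|x.1| < c -> `|x.2| < c -> `|x| < c.
Proof. by move=> h1 h2; rewrite prod_normE gt_max h1 h2. Qed.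

Lemma split_id (u v w A B : P) : u - w - (A + B) = (u - v - A) + (v - w - B).
Proof.
case: u v w A B => [u1 u2] [v1 v2] [w1 w2] [A1 A2] [B1 B2].
by rewrite /=; congr pair; ring.
Qed.

Lemma key (D : set P) (f : P -> P) (p : P) (e : R) : open D -> C1_on D f -> D p -> 0 < e ->
  exists2 r : R, 0 < r & (forall q, `|p - q| < r -> D q) /\
   (forall q q', `|p - q| < r -> `|p - q'| < r ->
     `|f q - f q' - ((q.1 - q'.1) *: pdx f p + (q.2 - q'.2) *: pdy f p)|
       <= (e + e) * `|q - q'|).
Proof.
move=> oD C1 Dp e0.
have [_ _ cx cy] := C1 p Dp.
have FP : Filter (nbhs p) := nbhs_pfilter p.
have Nx : nbhs p (fun t => `|pdx f p - pdx f t| < e).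
  have h := (cvgrPdist_lt _ _).1 cx e e0; first [exact: (h FP) | exact: h].
have Ny : nbhs p (fun t => `|pdy f p - pdy f t| < e).
  have h := (cvgrPdist_lt _ _).1 cy e e0; first [exact: (h FP) | exact: h].
have ND : nbhs p D by move: oD; rewrite openE => /(_ p Dp).
have [r1 r10 H1] := (nbhs_ballP _ _).1 ND.
have [r2 r20 H2] := (nbhs_ballP _ _).1 Nx.
have [r3 r30 H3] := (nbhs_ballP _ _).1 Ny.
pose r := Num.min r1 (Num.min r2 r3).
have r0 : 0 < r by rewrite /r !lt_min r10 r20 r30.
exists r => //.
have bE z : `|p - z| < r -> [/\ D z, `|pdx f p - pdx f z| < e & `|pdy f p - pdy f z| < e].
  move=> h; have hb : forall r', r <= r' -> ball p r' z.
    by move=> r' hr; rewrite -ball_normE /ball_ /=; apply: lt_le_trans hr.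
  split; [apply: H1|apply: H2|apply: H3]; apply: hb; rewrite /r ?ge_min ?lexx ?orbT //.
split; first by move=> q /bE [].
move=> [x1 x2] [y1 y2] hx hy /=.
rewrite (split_id _ (f (y1, x2))).
apply: le_trans (ler_normD _ _) _.
rewrite mulrDl; apply: lerD.
  apply: le_trans (@seg_bound (fun s => f (s, x2)) (pdx f p) x1 y1 e _) _.
    move=> t ht.
    have hz : `|p - (t, x2)| < r.
      apply: nPlt => /=.
        apply: between_ball ht.
          exact: le_lt_trans (nP1 (p - (x1, x2))) hx.
        exact: le_lt_trans (nP1 (p - (y1, y2))) hy.
      exact: le_lt_trans (nP2 (p - (x1, x2))) hx.
    have [Dz hpx _] := bE _ hz; have [d1 _ _ _] := C1 _ Dz.
    split; first exact: d1.
    by rewrite -derive1E; exact: hpx.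
  by apply: ler_wpM2l; [exact: ltW|exact: (nP1 ((x1, x2) - (y1, y2)))].
apply: le_trans (@seg_bound (fun s => f (y1, s)) (pdy f p) x2 y2 e _) _.
  move=> t ht.
  have hz : `|p - (y1, t)| < r.
    apply: nPlt => /=.
      exact: le_lt_trans (nP1 (p - (y1, y2))) hy.
    apply: between_ball ht.
      exact: le_lt_trans (nP2 (p - (x1, x2))) hx.
    exact: le_lt_trans (nP2 (p - (y1, y2))) hy.
  have [Dz _ hpy] := bE _ hz; have [_ d2 _ _] := C1 _ Dz.
  split; first exact: d2.
  by rewrite -derive1E; exact: hpy.
by apply: ler_wpM2l; [exact: ltW|exact: (nP2 ((x1, x2) - (y1, y2)))].
Qed.

Lemma sP (k : R) (x : P) : k *: x = (k * x.1, k * x.2).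
Proof. by case: x. Qed.

Lemma aP (x y : P) : x + y = (x.1 + y.1, x.2 + y.2).
Proof. by case: x; case: y. Qed.
Lemma nP (x : P) : - x = (- x.1, - x.2).
Proof. by case: x. Qed.

Definition Linv (a b w : P) : P :=
  ((b.2 * w.1 - b.1 * w.2) / (a.1 * b.2 - b.1 * a.2),
   (a.1 * w.2 - a.2 * w.1) / (a.1 * b.2 - b.1 * a.2)).

Lemma LLi (a b w : P) : a.1 * b.2 - b.1 * a.2 != 0 ->
  (Linv a b w).1 *: a + (Linv a b w).2 *: b = w.
Proof.
case: w => w1 w2; case: a => a1 a2; case: b => b1 b2 /= J0.
rewrite /Linv /=.
by rewrite !sP; congr pair; cbv [fst snd]; field.
Qed.

Lemma Tid (a b q q' F F' y : P) : a.1 * b.2 - b.1 * a.2 != 0 ->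
  (q - Linv a b (F - y)) - (q' - Linv a b (F' - y)) =
  - Linv a b (F - F' - ((q.1 - q'.1) *: a + (q.2 - q'.2) *: b)).
Proof.
case: a => a1 a2; case: b => b1 b2; case: q => q1 q2; case: q' => r1 r2.
case: F => F1 F2; case: F' => G1 G2; case: y => y1 y2 => J0.
move: J0; cbv [fst snd] => J0.
by rewrite /Linv !sP !(aP, nP); congr pair; cbv [fst snd]; field.
Qed.

Lemma LiN (a b w : P) : `|Linv a b w| <=
  ((`|a.1| + `|a.2| + `|b.1| + `|b.2|) / `|a.1 * b.2 - b.1 * a.2| + 1) * `|w|.
Proof.
case: a => a1 a2; case: b => b1 b2; rewrite /Linv; cbv [fst snd].
set J := a1 * b2 - b1 * a2.
set S := `|a1| + `|a2| + `|b1| + `|b2|.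
have hw1 := nP1 w; have hw2 := nP2 w.
have w0 : 0 <= `|w| by [].
have Jv : 0 <= `|J|^-1 by rewrite invr_ge0.
have n1 := normr_ge0 a1; have n2 := normr_ge0 a2.
have n3 := normr_ge0 b1; have n4 := normr_ge0 b2.
have fin (X : R) : `|X| <= S * `|w| -> `|X / J| <= (S / `|J| + 1) * `|w|.
  move=> hX; rewrite normrM normfV.
  apply: le_trans (ler_wpM2r Jv hX) _.
  nra.
apply: nPle; apply: fin; cbv [fst snd].
  apply: le_trans (ler_normB _ _) _; rewrite !normrM.
  have m1 := normr_ge0 w.1; have m2 := normr_ge0 w.2.
  rewrite /S; nra.
apply: le_trans (ler_normB _ _) _; rewrite !normrM.
have m1 := normr_ge0 w.1; have m2 := normr_ge0 w.2.
rewrite /S; nra.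
Qed.

Lemma zc (a b : P) : (0:R) *: a + (0:R) *: b = 0.
Proof. by rewrite !scale0r addr0. Qed.

Lemma onto (D : set P) (f : P -> P) (p : P) : open D -> C1_on D f -> D p -> jac f p != 0 ->
  forall rho, 0 < rho -> exists2 del, 0 < del &
    forall y, `|f p - y| < del -> exists2 q, `|p - q| < rho & f q = y.
Proof.
move=> oD C1 Dp J0 rho rho0.
have {}J0 : (pdx f p).1 * (pdy f p).2 - (pdy f p).1 * (pdx f p).2 != 0 := J0.
move: J0; set a := pdx f p; set b := pdy f p => J0.
have LN := LiN a b.
move: LN; set K := (_ / _ + 1) => LN.
have K0 : 0 < K.
  have h : 0 <= (`|a.1| + `|a.2| + `|b.1| + `|b.2|) / `|a.1 * b.2 - b.1 * a.2|.
    by rewrite divr_ge0 // !addr_ge0.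
  by apply: le_lt_trans h _; rewrite /K ltrDl ltr01.
have e0 : 0 < (4 * K)^-1 by rewrite invr_gt0 mulr_gt0.
have [r r0 [rD Hr]] := @key D f p _ oD C1 Dp e0.
clearbody K.
pose s := Num.min (r / 2) (rho / 2).
have s0 : 0 < s by rewrite lt_min !divr_gt0.
have sr : s < r.
  have : s <= r / 2 by rewrite /s ge_min lexx.
  by move/le_lt_trans; apply; rewrite ltr_pdivrMr // ltr_pMr // ltr1n.
have srho : s < rho.
  have : s <= rho / 2 by rewrite /s ge_min lexx orbT.
  by move/le_lt_trans; apply; rewrite ltr_pdivrMr // ltr_pMr // ltr1n.
clearbody s.
pose del := s / (2 * K).
exists del; first by rewrite divr_gt0 // mulr_gt0.
move=> y hy.
pose T q := q - Linv a b (f q - y).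
pose U := closed_ball_ Num.Def.normr p s.
have Ur q : U q -> `|p - q| < r by move=> Uq; apply: le_lt_trans Uq sr.
have Tc q q' : U q -> U q' -> `|T q - T q'| <= 2^-1 * `|q - q'|.
  move=> Uq Uq'; rewrite /T Tid // normrN.
  apply: le_trans (LN _) _.
  apply: le_trans (ler_wpM2l (ltW K0) (Hr q q' (Ur _ Uq) (Ur _ Uq'))) _.
  rewrite mulrA ler_wpM2r //.
  have -> : K * ((4 * K)^-1 + (4 * K)^-1) = 2^-1.
    by field; rewrite gt_eqF.
  by [].
have Up : U p by rewrite /U /closed_ball_ /= subrr normr0 ltW.
have TU q : U q -> U (T q).
  move=> Uq; rewrite /U /closed_ball_ /=.
  apply: le_trans (ler_distD (T p) p (T q)) _.
  have h1 : `|p - T p| <= s / 2.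
    rewrite /T subKr; apply: le_trans (LN _) _.
    apply: le_trans (ler_wpM2l (ltW K0) (ltW hy)) _.
    by rewrite /del le_eqVlt; apply/orP; left; apply/eqP; field; rewrite gt_eqF.
  have h2 : `|T p - T q| <= s / 2.
    apply: le_trans (Tc p q Up Uq) _.
    move: Uq; rewrite /U /closed_ball_ /= => Uq.
    by rewrite mulrC ler_wpM2r.
  by apply: le_trans (lerD h1 h2) _; rewrite -splitr.
have cU : closed U by exact: (@closed_closed_ball_ R (R * R)%type p s).
have [q Uq Hq] := @fixpt_ex R U T 2^-1 ltac:(by []) ltac:(by rewrite invf_lt1 // ltr1n) TU Tc
  cU (ex_intro _ p Up).
exists q; first by apply: le_lt_trans Uq srho.
have Z : Linv a b (f q - y) = 0.
  have : q - T q = 0 by rewrite -Hq subrr.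
  by rewrite /T subKr.
have z1 : (Linv a b (f q - y)).1 = 0 by rewrite Z.
have z2 : (Linv a b (f q - y)).2 = 0 by rewrite Z.
have E := LLi a b (f q - y) J0.
rewrite z1 z2 zc in E.
have : f q - y = 0 by rewrite -E.
by move/eqP; rewrite subr_eq0 => /eqP.
Qed.

Lemma Lbound (a b v : P) : `|v.1 *: a + v.2 *: b| <= (`|a| + `|b|) * `|v|.
Proof.
apply: le_trans (ler_normD _ _) _; rewrite !normrZ mulrDl.
have h1 := nP1 v; have h2 := nP2 v.
apply: lerD; rewrite mulrC.
  by apply: ler_wpM2l => //.
by apply: ler_wpM2l => //.
Qed.

Lemma fcont (D : set P) (f : P -> P) (p : P) : open D -> C1_on D f -> D p ->
  {for p, continuous f}.
Proof.
move=> oD C1 Dp.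
have [r r0 [rD Hr]] := @key D f p 1 oD C1 Dp ltr01.
set a := pdx f p in Hr; set b := pdy f p in Hr.
pose M := `|a| + `|b| + 2.
have M0 : 0 < M by rewrite /M ltr_wpDl // addr_ge0.
move=> B /nbhs_ballP [eps /= eps0 hB].
apply/nbhs_ballP; exists (Num.min r (eps / M)); first by rewrite /= lt_min r0 divr_gt0.
move=> t; rewrite -ball_normE /ball_ /= lt_min => /andP[tr te].
apply: hB; rewrite -ball_normE /ball_ /=.
have p0 : `|p - p| < r by rewrite subrr normr0.
have Ht := Hr p t p0 tr.
have HL : `|(p.1 - t.1) *: a + (p.2 - t.2) *: b| <= (`|a| + `|b|) * `|p - t|.
  exact: (Lbound a b (p - t)).
have E : f p - f t = (f p - f t - ((p.1 - t.1) *: a + (p.2 - t.2) *: b)) +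
                     ((p.1 - t.1) *: a + (p.2 - t.2) *: b) by rewrite subrK.
rewrite E; apply: le_lt_trans (ler_normD _ _) _.
apply: le_lt_trans (lerD Ht HL) _.
rewrite -mulrDl addrC.
have -> : `|a| + `|b| + (1 + 1) = M by [].
by rewrite mulrC -ltr_pdivlMr.
Qed.

End Analysis.

Section Topo.
Context {T : topologicalType}.

Lemma connected_between (A B : set T) : connected A -> A `<=` B -> B `<=` closure A ->
  connected B.
Proof.
move=> ctdA AB BcA U U0 [C1 oC1 C1E] [C2 cC2 C2E].
have AU : A `<=` U.
  rewrite -setIidPl; apply: ctdA.
  - move: U0; rewrite C1E => -[z [Bz C1z]].
    have [w [Aw C1w]] := BcA z Bz C1 (open_nbhs_nbhs (conj oC1 C1z)).
    by exists w; split => //; split => //; exact: AB.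
  - by exists C1 => //; rewrite C1E setIA (setIidl AB).
  - by exists C2 => //; rewrite C2E setIA (setIidl AB).
apply/seteqP; split; first by rewrite C2E; apply: subIsetl.
move=> x Bx; rewrite C2E; split => //.
have sA : A `<=` C2 by move=> y /AU; rewrite C2E => -[].
have := closureS sA; rewrite -((closure_id C2).1 cC2); apply.
exact: BcA.
Qed.

Lemma conn_add (A : set T) p : connected A -> closure A p -> connected (A `|` [set p]).
Proof.
move=> cA cl; apply: connected_between cA _ _; first by move=> x Ax; left.
by move=> x [/subset_closure //|->].
Qed.

Lemma clos_img (U : topologicalType) (f : T -> U) (A : set T) p :
  {for p, continuous f} -> closure A p -> closure (f @` A) (f p).
Proof.
move=> cf cl B nB; have [x [Ax Bx]] := cl _ (cf _ nB).
by exists (f x); split => //; exists x.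
Qed.
End Topo.

Lemma fin_conn (R : realType) (A : set (R * R)%type) a : finite_set A -> connected A -> A a ->
  A = [set a].
Proof.
move=> fA cA Aa.
have fc : forall B : set (R * R)%type, finite_set B -> closed B.
  apply/accessible_finite_set_closed/hausdorff_accessible.
  exact: norm_hausdorff.
symmetry; apply: cA.
- by exists a.
- exists (~` (A `\ a)).
    apply: closed_openC; apply: fc; apply: sub_finite_set fA; exact: subDsetl.
  apply/seteqP; split => x.
    by move=> ->; split => // -[_ h]; apply: h.
  move=> [Ax nx]; apply: contrapT => xa; apply: nx; split => //.
- exists [set a]; first by apply: fc; exact: finite_set1.
  by apply/seteqP; split => x; [move=> ->|move=> [_ ->]].
Qed.


Theorem lemma3p16 (R : realType) (D : set (R * R)) (f : R * R -> R * R)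
    (R1 R2 Omega : set (R * R)) :
  open D -> light D f -> C1_on D f ->
  is_component (D `\` f @^-1` (f @` crit D f `|` clusterC D f)) R1 ->
  is_component (D `\` f @^-1` (f @` crit D f `|` clusterC D f)) R2 ->
  R1 <> R2 ->
  closure R1 `&` closure R2 !=set0 ->
  f @` R1 = Omega -> f @` R2 = Omega ->
  finite_set (bdry Omega `&` interior (closure Omega)) ->
  ~ exists gamma : set (R * R),
      [/\ gamma !=set0, ~ degenerate gamma, connected gamma,
          gamma `<=` (closure R1 `&` closure R2 `&` D) `\` crit D f &
          open (R1 `|` R2 `|` gamma)].
Proof.
move=> oD lf C1 [x1 [Ux1 eR1]] [x2 [Ux2 eR2]] neq _ E1 E2 fin [gamma [g0 ndeg cg gsub oW]].
set V := D `\` f @^-1` (f @` crit D f `|` clusterC D f) in Ux1 Ux2 eR1 eR2.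
have cR1 : connected R1 by rewrite eR1; exact: component_connected.
have cR2 : connected R2 by rewrite eR2; exact: component_connected.
have sR1 : R1 `<=` V by rewrite eR1; exact: connected_component_sub.
have sR2 : R2 `<=` V by rewrite eR2; exact: connected_component_sub.
have fc : forall p, D p -> {for p, continuous f} by move=> p Dp; exact: fcont oD C1 Dp.
have notV : forall p, gamma p -> ~ V p.
  move=> p gp Vp; have [[[c1 c2] Dp] _] := gsub p gp.
  have h1 : R1 p.
    rewrite eR1; apply: (connected_component_max (B := R1 `|` [set p])).
    - by left; rewrite eR1; exact: connected_component_refl.
    - by move=> z [/sR1 //|->].
    - exact: conn_add.
    - by right.
  have h2 : R2 p.
    rewrite eR2; apply: (connected_component_max (B := R2 `|` [set p])).
    - by left; rewrite eR2; exact: connected_component_refl.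
    - by move=> z [/sR2 //|->].
    - exact: conn_add.
    - by right.
  apply: neq; move: h1 h2; rewrite eR1 eR2 => h1 h2.
  by rewrite (same_connected_component h1) (same_connected_component h2).
have nOm : forall p, gamma p -> ~ Omega (f p).
  move=> p gp; rewrite -E1 => -[r r1 frp].
  have [[[_ _] Dp] _] := gsub p gp.
  apply: (notV p gp); split => // hF.
  have [_ nr] := sR1 _ r1.
  by apply: nr; rewrite /preimage /= frp.
have fW : forall w, (R1 `|` R2 `|` gamma) w -> closure Omega (f w).
  move=> w [[w1|w2]|gw].
  - by apply: subset_closure; rewrite -E1; exists w.
  - by apply: subset_closure; rewrite -E2; exists w.
  - have [[[c1 _] Dw] _] := gsub w gw.
    by rewrite -E1; exact: clos_img (fc w Dw) c1.
have inter : forall p, gamma p -> interior (closure Omega) (f p).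
  move=> p gp; have [[[_ _] Dp] ncr] := gsub p gp.
  have J0 : jac f p != 0 by apply/eqP => h; apply: ncr; split.
  have Wp : (R1 `|` R2 `|` gamma) p by right.
  have : nbhs p (R1 `|` R2 `|` gamma) by move: oW; rewrite openE => /(_ p Wp).
  move=> /nbhs_ballP [rho rho0 hrho].
  have [del del0 Hd] := @onto R D f p oD C1 Dp J0 rho rho0.
  rewrite /interior; apply/nbhs_ballP; exists del => // y.
  rewrite -ball_normE /ball_ /= => hy.
  have [q hq <-] := Hd y hy.
  by apply: fW; apply: hrho; rewrite -ball_normE /ball_ /=.
have sub : f @` gamma `<=` bdry Omega `&` interior (closure Omega).
  move=> _ [p gp <-]; split; last exact: inter.
  split; first by apply: fW; right.
  by move=> /interior_subset; exact: nOm.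
have cfg : connected (f @` gamma).
  apply: connected_continuous_connected cg _.
  apply: continuous_in_subspaceT => x /set_mem gx.
  have [[[_ _] Dx] _] := gsub x gx; exact: fc.
have [p0 gp0] := g0.
have fgE : f @` gamma = [set f p0].
  by apply: fin_conn (sub_finite_set sub fin) cfg _; exists p0.
have gsubL : gamma `<=` D `&` f @^-1` [set f p0].
  move=> q gq; have [[[_ _] Dq] _] := gsub q gq; split => //.
  have : (f @` gamma) (f q) by exists q.
  by rewrite fgE.
have cc := lf (f p0) p0 (gsubL p0 gp0).
have gs : gamma `<=` [set p0].
  by rewrite -cc; exact: connected_component_max gp0 gsubL cg.
by apply: ndeg; exists p0; apply/seteqP; split => // q ->.
Qed.
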